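(* Let $A$ be a set, $T=A^*$, $Y$ a semilattice and $\cdot$ a left partial action of $T$ on $Y$ satisfying axioms (A), (B), (C) which is a partially defined action, with reverse right partial action $\circ$. Let $\sim$ and $\approx$ be the equivalence relations on $Y\times T$ defined in the context. Then: (1) every $\sim$-class $B$ contains a unique element $(x,w)$ (called canonical) with $|w|=\min\{|u|\colon (y,u)\in B\}$; moreover, if $(x,w)$ is canonical and $(y,u)\sim(x,w)$, then $x\circ t$ is defined and $(y,u)=(x\circ t,wt)$ for some $t\in A^*$; (2) the equivalences $\sim$ and $\approx$ on $Y\times T$ coincide.
   Context: $A^*$ is the free monoid on $A$ and $|w|$ is the length of the word $w$ (the empty word has length $0$). A left partial action of $T$ on $Y$: $1\cdot y=y$ always defined; if $t\cdot y$, $s\cdot(t\cdot y)$ are defined then $(st)\cdot y$ is defined and equals it. With $\varphi_t\colon y\mapsto t\cdot y$: (A) $\mathrm{dom}\varphi_t$, $\mathrm{ran}\varphi_t$ are order ideals; (B) $\varphi_t$ is an order-isomorphism between them; (C) $\mathrm{dom}\varphi_t\ne\varnothing$. It is a partially defined action if $(st)\cdot x$ is defined iff $t\cdot x$ and $s\cdot(t\cdot x)$ are defined. Reverse: $y\circ t$ defined iff $y\in\mathrm{ran}\varphi_t$, and $y\circ t=\varphi_t^{-1}(y)$. For $(x,s),(y,t)\in Y\times T$ put $(x,s)\to(y,t)$ if there is $p\in T$ with $s=tp$, $p\cdot x$ defined and $p\cdot x=y$. Let $\sim$ be the equivalence relation generated by $\to$, with classes $[x,s]_\sim$. On $(Y\times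 T)/\!\sim$ set $C\ge D$ if there are $(x,s)\in C$ and $(y,s)\in D$ with $x\ge y$ (a preorder). Let $(x,s)\approx(y,t)$ iff $[x,s]_\sim\le[y,t]_\sim$ and $[y,t]_\sim\le[x,s]_\sim$. *)

(* Defs.v *)
From HB Require Import structures.
From mathcomp Require Import all_boot all_order.
From Stdlib Require Import Relations.Relation_Operators.
Set Implicit Arguments. Unset Strict Implicit. Unset Printing Implicit Defensive.
Import Order.TTheory.
Local Open Scope order_scope.

(* T = A^* is [seq A] with concatenation; the product st is [s ++ t].
   A left partial action of T on Y is encoded as [act : seq A -> Y -> option Y],
   where [act t y = Some z] means "t . y is defined and equals z". *)

Section PA.
Variables (d : Order.disp_t) (Y : meetSemilatticeType d) (A : Type).
Variable act : seq A -> Y -> option Y.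

Definition defined_at (t : seq A) (y : Y) : Prop := exists z, act t y = Some z.

Definition dom_phi (t : seq A) (y : Y) : Prop := defined_at t y.
Definition ran_phi (t : seq A) (z : Y) : Prop := exists y, act t y = Some z.

Definition order_ideal (P : Y -> Prop) : Prop :=
  forall x y, P x -> y <= x -> P y.

Definition left_partial_action : Prop :=
  (forall y, act [::] y = Some y) /\
  (forall s t y z w, act t y = Some z -> act s z = Some w -> act (s ++ t) y = Some w).

Definition axiom_A : Prop :=
  forall t, order_ideal (dom_phi t) /\ order_ideal (ran_phi t).

Definition axiom_B : Prop :=
  forall t x y x' y', act t x = Some x' -> act t y = Some y' ->
    (x <= y) = (x' <= y').

Definition axiom_C : Prop := forall t, exists y, dom_phi t y.

Definition partially_defined_action : Prop :=
  forall s t x, defined_at (s ++ t) x <->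
    (exists z, act t x = Some z /\ defined_at s z).

(* reverse right partial action: [rev_act y t x] means "y o t is defined
   and y o t = x", i.e. y \in ran phi_t and phi_t^{-1}(y) = x. *)
Definition rev_act (y : Y) (t : seq A) (x : Y) : Prop := act t x = Some y.

Definition arrow (a b : Y * seq A) : Prop :=
  exists p, a.2 = b.2 ++ p /\ act p a.1 = Some b.1.

Definition sim : Y * seq A -> Y * seq A -> Prop := clos_refl_sym_trans _ arrow.

Definition cls_le (a b : Y * seq A) : Prop :=
  exists (x y : Y) (s : seq A), sim (x, s) b /\ sim (y, s) a /\ y <= x.

Definition approx (a b : Y * seq A) : Prop := cls_le a b /\ cls_le b a.

Definition canonical (a : Y * seq A) : Prop :=
  forall b, sim b a -> size a.2 <= size b.2.

End PA.

(* Main.v *)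
Require Import Defs.
From HB Require Import structures.
From mathcomp Require Import all_boot all_order.
From mathcomp Require Import zify.
From Stdlib Require Import Relations.Relation_Operators.
Import Order.TTheory.
Local Open Scope order_scope.
Set Implicit Arguments. Unset Strict Implicit.

Fixpoint nf (d : Order.disp_t) (Y : meetSemilatticeType d) (A : Type)
  (act : seq A -> Y -> option Y) (y : Y) (u : seq A) : Y * seq A :=
  match u with
  | [::] => (y, [::])
  | a :: u' => match act (a :: u') y with
               | Some z => (z, [::])
               | None => ((nf act y u').1, a :: (nf act y u').2)
               end
  end.

Definition NF (d : Order.disp_t) (Y : meetSemilatticeType d) (A : Type)
  (act : seq A -> Y -> option Y) (c : Y * seq A) := nf act c.1 c.2.

Lemma nf_arrow (d : Order.disp_t) (Y : meetSemilatticeType d) (A : Type)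
  (act : seq A -> Y -> option Y) :
  left_partial_action act -> forall y u,
  exists p, u = (nf act y u).2 ++ p /\ act p y = Some (nf act y u).1.
Proof.
move=> [H0 _] y; elim=> [|a u IH] /=.
  by exists [::]; rewrite H0.
case E: (act (a :: u) y) => [z|] /=.
  by exists (a :: u).
have [p [Hu Hp]] := IH; exists p; split => //; by rewrite {1}Hu.
Qed.

Lemma nf_shift (d : Order.disp_t) (Y : meetSemilatticeType d) (A : Type)
  (act : seq A -> Y -> option Y) :
  left_partial_action act -> partially_defined_action act ->
  forall p x y, act p x = Some y -> forall t, nf act x (t ++ p) = nf act y t.
Proof.
move=> [H0 Hc] Hp p x y Hxy; elim=> [|a t IH] /=.
  case: p Hxy => [|b p] /=; first by rewrite H0 => -[->].
  by move=> ->.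
case E: (act (a :: t ++ p) x) => [z|].
  have [m [Hm [v Hv]]] := (proj1 (Hp (a :: t) p x)) (ex_intro _ z E).
  rewrite Hxy in Hm; case: Hm => Hm; subst m.
  have := Hc _ _ _ _ _ Hxy Hv; rewrite /= E => -[->].
  by rewrite Hv.
case E2: (act (a :: t) y) => [v|].
  by have := Hc _ _ _ _ _ Hxy E2; rewrite /= E.
by rewrite IH.
Qed.

Lemma arrow_NF (d : Order.disp_t) (Y : meetSemilatticeType d) (A : Type)
  (act : seq A -> Y -> option Y) :
  left_partial_action act -> partially_defined_action act ->
  forall a b, arrow act a b -> NF act a = NF act b.
Proof.
move=> H1 H2 [x s] [y t] [p [/= -> Hp]].
by rewrite /NF /= (nf_shift H1 H2 Hp).
Qed.

Lemma sim_NF (d : Order.disp_t) (Y : meetSemilatticeType d) (A : Type)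
  (act : seq A -> Y -> option Y) :
  left_partial_action act -> partially_defined_action act ->
  forall a b, sim act a b -> NF act a = NF act b.
Proof.
move=> H1 H2 a b; elim.
- by move=> ??; apply: arrow_NF.
- by [].
- by move=> ?? _ ->.
- by move=> ??? _ -> _ ->.
Qed.

Lemma arrow_to_NF (d : Order.disp_t) (Y : meetSemilatticeType d) (A : Type)
  (act : seq A -> Y -> option Y) :
  left_partial_action act -> forall a, arrow act a (NF act a).
Proof.
move=> H1 [y u]; have [p [Hu Hp]] := nf_arrow H1 y u.
by exists p.
Qed.

Lemma NF_sim (d : Order.disp_t) (Y : meetSemilatticeType d) (A : Type)
  (act : seq A -> Y -> option Y) :
  left_partial_action act -> forall a b, NF act a = NF act b -> sim act a b.
Proof.
move=> H1 a b E.
apply: rst_trans; first exact: (rst_step _ _ _ _ (arrow_to_NF H1 a)).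
rewrite E; apply: rst_sym; exact: (rst_step _ _ _ _ (arrow_to_NF H1 b)).
Qed.

Lemma NF_idem (d : Order.disp_t) (Y : meetSemilatticeType d) (A : Type)
  (act : seq A -> Y -> option Y) :
  left_partial_action act -> partially_defined_action act ->
  forall a, NF act (NF act a) = NF act a.
Proof.
move=> H1 H2 a; symmetry; apply: arrow_NF => //; exact: arrow_to_NF.
Qed.

Lemma canon_suffix (d : Order.disp_t) (Y : meetSemilatticeType d) (A : Type)
  (act : seq A -> Y -> option Y) :
  left_partial_action act -> partially_defined_action act ->
  forall z w w' r v, NF act (z, w) = (z, w) -> w = w' ++ r ->
  act r z = Some v -> r = [::].
Proof.
move=> H1 H2 z w w' r v E Hw Hr.
have Ha : arrow act (z, w) (v, w') by exists r.
have := arrow_NF H1 H2 Ha; rewrite E.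
have [p [Hu _]] := nf_arrow H1 v w'.
rewrite /NF /= => E2; move: Hu; rewrite -E2 /= => Hu.
have : size w' = size w + size p by rewrite {1}Hu size_cat.
rewrite Hw size_cat; case: r {Hw Hr Ha} => //= ?? ; lia.
Qed.

Lemma sim_canon (d : Order.disp_t) (Y : meetSemilatticeType d) (A : Type)
  (act : seq A -> Y -> option Y) :
  left_partial_action act -> partially_defined_action act ->
  forall x s b, sim act (x, s) b ->
  exists t, s = (NF act b).2 ++ t /\ act t x = Some (NF act b).1.
Proof.
move=> H1 H2 x s b H; rewrite -(sim_NF H1 H2 H); exact: nf_arrow.
Qed.

Lemma cat_split (A : Type) (w1 w2 t1 t2 : seq A) :
  w1 ++ t1 = w2 ++ t2 ->
  (exists r, w2 = w1 ++ r /\ t1 = r ++ t2) \/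
  (exists r, w1 = w2 ++ r /\ t2 = r ++ t1).
Proof.
elim: w1 w2 => [|a w1 IH] [|b w2] /=.
- by move=> ->; left; exists [::].
- by move=> ->; left; exists (b :: w2).
- by move=> <-; right; exists (a :: w1).
- case=> -> /IH [[r [-> ->]]|[r [-> ->]]]; [left|right]; by exists r.
Qed.

Lemma cls_le_NF (d : Order.disp_t) (Y : meetSemilatticeType d) (A : Type)
  (act : seq A -> Y -> option Y) :
  left_partial_action act -> axiom_A act -> axiom_B act ->
  partially_defined_action act ->
  forall a b, cls_le act a b ->
  exists r, (NF act b).2 = (NF act a).2 ++ r /\
            (r = [::] -> (NF act a).1 <= (NF act b).1).
Proof.
move=> H1 HA HB H2 a b [x [y [s [Hxb [Hya Hle]]]]].
have [t [Hs Ht]] := sim_canon H1 H2 Hxb.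
have [t' [Hs' Ht']] := sim_canon H1 H2 Hya.
have Ecan : NF act (NF act a) = NF act a := NF_idem H1 H2 a.
move: Ecan Hs' Ht'; case: (NF act a) => [za wa] /= Ecan Hs' Ht'.
move: Hs Ht; case: (NF act b) => [zb wb] /= Hs Ht.
rewrite Hs' in Hs.
have [[r [Hw Ht2]]|[r [Hw Ht2]]] := cat_split Hs.
-
  subst t'.
  have [m [Hm [v Hv]]] := proj1 (H2 r t y) (ex_intro _ za Ht').
  have Hmz : m <= zb by rewrite -(HB t y x m zb Hm Ht).
  exists r; split => // r0; subst r.
  move: Ht'; rewrite /= Hm => -[<-]; exact: Hmz.
-
  subst t.
  have [m [Hm [v Hv]]] := proj1 (H2 r t' x) (ex_intro _ zb Ht).
  have Hzm : za <= m by rewrite -(HB t' y x za m Ht' Hm).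
  have [v' Hv'] := (proj1 (HA r)) m za (ex_intro _ v Hv) Hzm.
  have r0 := canon_suffix H1 H2 Ecan Hw Hv'.
  subst r; exists [::]; rewrite cats0 Hw cats0; split => // _.
  by move: Ht; rewrite /= Hm => -[<-].
Qed.

Lemma canonical_NF (d : Order.disp_t) (Y : meetSemilatticeType d) (A : Type)
  (act : seq A -> Y -> option Y) :
  left_partial_action act -> partially_defined_action act ->
  forall c, canonical act c -> NF act c = c.
Proof.
move=> H1 H2 [y u] Hc.
have [p [Hu Hp]] := nf_arrow H1 y u.
have Hs : sim act (NF act (y, u)) (y, u).
  apply: rst_sym; exact: (rst_step _ _ _ _ (arrow_to_NF H1 (y, u))).
have := Hc _ Hs; rewrite /NF /= {1}Hu size_cat.
case: p Hu Hp => [|? ?] /=; last by lia.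
rewrite cats0 (proj1 H1) => Hu [Hy] _.
by move: Hu Hy; case: (nf act y u) => ?? /= -> ->.
Qed.

Theorem lemma5p2 (d : Order.disp_t) (Y : meetSemilatticeType d) (A : Type)
  (act : seq A -> Y -> option Y) :
  left_partial_action act -> axiom_A act -> axiom_B act -> axiom_C act ->
  partially_defined_action act ->
  ((forall B : Y * seq A,
      exists! c : Y * seq A, sim act c B /\ canonical act c) /\
   (forall (x : Y) (w : seq A) (y : Y) (u : seq A),
      canonical act (x, w) -> sim act (y, u) (x, w) ->
      exists t : seq A, rev_act act x t y /\ u = w ++ t)) /\
  (forall a b : Y * seq A, sim act a b <-> approx act a b).
Proof.
move=> H1 HA HB HC H2; split; [split|].
- move=> B; exists (NF act B); split.
    split.
      apply: rst_sym; exact: (rst_step _ _ _ _ (arrow_to_NF H1 B)).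
    move=> b Hb; rewrite -(NF_idem H1 H2 B) -(sim_NF H1 H2 Hb).
    case: b {Hb} => y u; have [p [Hu _]] := nf_arrow H1 y u.
    by rewrite /NF /= {2}Hu size_cat leEnat leq_addr.
  move=> c [Hc Hcan]; rewrite -(sim_NF H1 H2 Hc).
  exact: canonical_NF.
- move=> x w y u Hc Hs.
  have [t [Hu Ht]] := sim_canon H1 H2 Hs.
  rewrite (canonical_NF H1 H2 Hc) /= in Hu Ht.
  by exists t.
- move=> a b; split.
    move=> H; split.
      by exists a.1, a.1, a.2; rewrite -surjective_pairing; split; [|split; [exact: rst_refl|]].
    exists b.1, b.1, b.2; rewrite -surjective_pairing; split; first exact: rst_sym.
    by split; [exact: rst_refl|].
  move=> [Hab Hba]; apply: NF_sim => //.
  have [r [Er Hr]] := cls_le_NF H1 HA HB H2 Hab.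
  have [r' [Er' Hr']] := cls_le_NF H1 HA HB H2 Hba.
  have Hsz : size r = 0%N /\ size r' = 0%N.
    have := congr1 size Er; have := congr1 size Er'; rewrite !size_cat; lia.
  case: Hsz => /size0nil Hr0 /size0nil Hr0'.
  have E : (NF act b).1 = (NF act a).1 by apply: le_anti; rewrite (Hr' Hr0') (Hr Hr0).
  by move: Er; rewrite Hr0 cats0; case: (NF act a) E => ??; case: (NF act b) => ?? /= -> ->.
Qed.
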